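(* Let $\lambda,\mu,\lambda',\mu',k,k'\in\mathbb{C}$, $p,p'\in\mathbb{Z}_2$ and $l,l'\in\mathbb{Z}^+$, and write $\delta=\mu-\lambda$, $\delta'=\mu'-\lambda'$. If the $\mathcal{K}$-modules $\mathrm{SQ}^{k,p,l}_{\lambda,\mu}$ and $\mathrm{SQ}^{k',p',l'}_{\lambda',\mu'}$ are equivalent, then $l=l'$, $\delta-k=\delta'-k'$, and the parity of the equivalence is $p-p'$ (even if $p=p'$, odd otherwise). There are no equivalences of mixed parity between such modules.
   Context: Work over $\mathbb{C}$ on the superline $\mathbb{R}^{1|1}$ in the polynomial category. Let $\mathbb{C}[x,\xi]$ be the polynomial superalgebra with even coordinate $x$ and odd coordinate $\xi$ ($\xi^2=0$), and set $D=\partial_\xi+\xi\partial_x$, $\bar D=\partial_\xi-\xi\partial_x$. For $F\in\mathbb{C}[x,\xi]$ put $X_F=F\partial_x+\tfrac12 D(F)\bar D$; the Lie superalgebra of contact vector fields is $\mathcal{K}=\{X_F:F\in\mathbb{C}[x,\xi]\}$. For a superspace $V$, $V^\Pi$ is $V$ with parity reversed, and $V^{p\Pi}$ is $V$ if $p$ is even and $V^\Pi$ if $p$ is odd. For $\nu\in\mathbb{C}$ the tensor density module is $\mathcal{F}_\nu=\alpha^\nu\mathbb{C}[x,\xi]$ ($\alpha^\nu$ a formal even symbol) with action $L_\nu(X_F)(\alpha^\nu G)=\alpha^\nu(X_F(G)+\nu\,\partial_x(F)\,G)$. For $\lambda,\mu\in\mathbb{C}$ write $\delta=\mu-\lambda$.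 For $z\in\mathbb{C}$ define formal symbols $\bar D^z_0=e^{i\pi z/2}\partial_x^{z/2}$ (even) and $\bar D^z_1=e^{i\pi(z-1)/2}\partial_x^{(z-1)/2}\bar D$ (odd). For $k\in\mathbb{C}$, $p\in\mathbb{Z}_2$, the space of pseudodifferential operators is $\Psi^{k,p}_{\lambda,\mu}=\{\alpha^{\delta}\sum_{j\in\mathbb{N}}T_{2k-j}\bar D^{2k-j}_{p+(j\bmod 2)}:T_{2k-j}\in\mathbb{C}[x,\xi]\}$ (formal series). Composition is defined by $\bar D^{z'}_{p'}\circ\bar D^z_p=\bar D^{z+z'}_{p+p'}$, $[\bar D,\partial_x^z]=0$ and the generalized Leibniz rule $\partial_x^z\circ F=\sum_{j\in\mathbb{N}}\binom{z}{j}\partial_x^j(F)\circ\partial_x^{z-j}$, and $\mathcal{K}$ acts by $L_{\lambda,\mu}(X)(T)=L_\mu(X)\circ T-(-1)^{|X||T|}T\circ L_\lambda(X)$; the spaces $\Psi^{k-1/2,p+1}_{\lambda,\mu}\subset\Psi^{k,p}_{\lambda,\mu}$ are $\mathcal{K}$-submodules. For $l\in\mathbb{Z}^+$, $\mathrm{SQ}^{k,p,l}_{\lambda,\mu}=\Psi^{k,p}_{\lambda,\mu}/\Psi^{k-l/2,\,p+l}_{\lambda,\mu}$, a $\mathcal{K}$-module with successive composition factors $\mathcal{F}^{p\Pi}_{\delta-k},\mathcal{F}^{(p+1)\Pi}_{\delta-k+1/2},\dots,\mathcal{F}^{(p+l-1)\Pi}_{\delta-k+(l-1)/2}$. Equivalences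 are $\mathcal{K}$-module isomorphisms, which may be even, odd or of mixed parity. *)

(* Defs.v *)
From HB Require Import structures.
From mathcomp Require Import all_boot all_order all_algebra.
From mathcomp Require Import reals Rstruct complex.
Set Implicit Arguments.
Unset Strict Implicit.
Unset Printing Implicit Defensive.
Import Order.TTheory GRing.Theory Num.Theory.
Local Open Scope ring_scope.

Definition CC : fieldType := complex Rdefinitions.R.

(** Superfunctions: F = f0(x) + xi f1(x) in C[x,xi], stored as (f0, f1).
    Even part = (f0,0), odd part = (0,f1). *)
Definition sfun : Type := ({poly CC} * {poly CC})%type.

Definition sf_mul (F G : sfun) : sfun := (F.1 * G.1, F.2 * G.1 + F.1 * G.2).
Definition sf_scale (c : CC) (F : sfun) : sfun := (c *: F.1, c *: F.2).
Definition sf_dx (F : sfun) : sfun := (F.1^`(), F.2^`()).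
Definition sf_dxn (n : nat) (F : sfun) : sfun := (F.1^`(n), F.2^`(n)).
(** D = d_xi + xi d_x  and  Dbar = d_xi - xi d_x *)
Definition sf_D (F : sfun) : sfun := (F.2, F.1^`()).
Definition sf_Dbar (F : sfun) : sfun := (F.2, - F.1^`()).
Definition sf_sigma (F : sfun) : sfun := (F.1, - F.2).
(** homogeneous part of parity g (false = even, true = odd) *)
Definition sf_part (g : bool) (F : sfun) : sfun := if g then (0, F.2) else (F.1, 0).

Definition binomC (w : CC) (n : nat) : CC :=
  (\prod_(i < n) (w - i%:R)) / (n`!)%:R.

(** Composition rule  Dbar^z_q o H = sum_m (cmp_coef z q H m) Dbar^(z-m)_(q+m),
    obtained from the generalized Leibniz rule (with Dbar^z_0 = e^{i pi z/2} d_x^{z/2},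
    Dbar^z_1 = Dbar^(z-1)_0 o Dbar, Dbar o H = Dbar(H) + (-1)^{|H|} H Dbar):
    q = 0 : m = 2n   : (-1)^n binom(z/2, n) H^{(n)};          m odd : 0
    q = 1 : m = 2n   : (-1)^n binom((z-1)/2, n) (sigma H)^{(n)}
            m = 2n+1 : (-1)^n binom((z-1)/2, n) (Dbar H)^{(n)}  *)
Definition cmp_coef (z : CC) (q : bool) (H : sfun) (m : nat) : sfun :=
  if ~~ q then
    (if odd m then 0
     else sf_scale ((-1) ^+ m./2 * binomC (z / 2%:R) m./2) (sf_dxn m./2 H))
  else if odd m then
    sf_scale ((-1) ^+ m./2 * binomC ((z - 1) / 2%:R) m./2) (sf_dxn m./2 (sf_Dbar H))
  else
    sf_scale ((-1) ^+ m./2 * binomC ((z - 1) / 2%:R) m./2) (sf_dxn m./2 (sf_sigma H)).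

(** An element of SQ^{k,p,l}_{lam,mu} is represented by its coefficients
    (T_0, ..., T_{l-1}), standing for  alpha^delta sum_{j<l} T_j Dbar^{2k-j}_{p+j}
    modulo Psi^{k-l/2, p+l}. *)
Definition SQ (l : nat) : Type := 'I_l -> sfun.

Definition sq_ext (l : nat) (T : SQ l) (j : nat) : sfun := odflt 0 (omap T (insub j)).

(** Action L_{lam,mu}(X_F)(T) = L_mu(X_F) o T - (-1)^{|X_F||T|} T o L_lam(X_F)
    for F homogeneous of parity fodd, computed in the quotient (coefficient of
    index i, i.e. of Dbar^{2k-i}_{p+i}).  Here
    L_nu(X_F) = -F Dbar^2_0 + 1/2 D(F) Dbar^1_1 + nu F' Dbar^0_0. *)
Definition act_h (lam mu k : CC) (p : bool) (l : nat) (fodd : bool) (F : sfun)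
  (T : SQ l) (i : 'I_l) : sfun :=
  let t := sq_ext T in
  let A := - sf_mul F (t i.+2)
           + sf_scale (1 / 2%:R) (sf_mul (sf_D F) (sf_sigma (t i.+1)))
           + sf_mul F (sf_dx (t i))
           + sf_scale (1 / 2%:R) (sf_mul (sf_D F) (sf_Dbar (t i)))
           + sf_scale mu (sf_mul (sf_dx F) (t i)) in
  let tt (j : nat) := if fodd then (if p (+) odd j then - sf_sigma (t j) else sf_sigma (t j))
                      else t j in
  let z (j : nat) := 2%:R * k - j%:R in
  let q (j : nat) := p (+) odd j in
  let B := \sum_(j < i.+3)
             sf_mul (tt j)
               (cmp_coef (z j) (q j) (- F) (i.+2 - j)
                + (if (j <= i.+1)%N then
                     cmp_coef (z j) (q j) (sf_scale (1 / 2%:R) (sf_D F)) (i.+1 - j) else 0)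
                + (if (j <= i)%N then
                     cmp_coef (z j) (q j) (sf_scale lam (sf_dx F)) (i - j) else 0)) in
  A - B.

Definition SQ_act (lam mu k : CC) (p : bool) (l : nat) (F : sfun) (T : SQ l) : SQ l :=
  fun i => act_h lam mu k p false (F.1, 0) T i + act_h lam mu k p true (0, F.2) T i.

(** Parity: the piece of parity g of T_j has total parity g + p + j. *)
Definition sq_even (p : bool) (l : nat) (T : SQ l) : Prop :=
  forall (j : 'I_l) (g : bool), g (+) p (+) odd j -> sf_part g (T j) = 0.
Definition sq_odd (p : bool) (l : nat) (T : SQ l) : Prop :=
  forall (j : 'I_l) (g : bool), ~~ (g (+) p (+) odd j) -> sf_part g (T j) = 0.

Definition sq_linear (l l' : nat) (phi : SQ l -> SQ l') : Prop :=
  (forall T1 T2 : SQ l, phi (fun i => T1 i + T2 i) = (fun i => phi T1 i + phi T2 i)) /\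
  (forall (c : CC) (T : SQ l), phi (fun i => sf_scale c (T i)) = (fun i => sf_scale c (phi T i))).

Definition SQ_equiv (lam mu k : CC) (p : bool) (l : nat)
  (lam' mu' k' : CC) (p' : bool) (l' : nat) (phi : SQ l -> SQ l') : Prop :=
  [/\ sq_linear phi, bijective phi &
      forall (F : sfun) (T : SQ l), phi (SQ_act lam mu k p F T) = SQ_act lam' mu' k' p' F (phi T)].

Definition even_map (p p' : bool) (l l' : nat) (phi : SQ l -> SQ l') : Prop :=
  forall T, (sq_even p T -> sq_even p' (phi T)) /\ (sq_odd p T -> sq_odd p' (phi T)).
Definition odd_map (p p' : bool) (l l' : nat) (phi : SQ l -> SQ l') : Prop :=
  forall T, (sq_even p T -> sq_odd p' (phi T)) /\ (sq_odd p T -> sq_even p' (phi T)).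

(* Main.v *)
Require Import Defs.
From HB Require Import structures.
From mathcomp Require Import all_boot all_order all_algebra.
From mathcomp Require Import reals Rstruct complex.
From mathcomp Require Import ring lra zify.
From Stdlib Require Import FunctionalExtensionality Classical.
Import GRing.Theory Num.Theory.
Local Open Scope ring_scope.

Lemma sq_ext_ord (l : nat) (T : SQ l) (i : 'I_l) : sq_ext T i = T i.
Proof. by rewrite /sq_ext valK. Qed.

Lemma binomC0 w : binomC w 0 = 1.
Proof. by rewrite /binomC big_ord0 fact0 divr1. Qed.
Lemma binomC1 w : binomC w 1 = w.
Proof. by rewrite /binomC big_ord1 factS fact0 divr1 subr0. Qed.

Lemma sf_scale1 H : sf_scale 1 H = H.
Proof. by case: H => a b; rewrite /sf_scale !scale1r. Qed.

Lemma cmp0 z q H : cmp_coef z q H 0 = if q then sf_sigma H else H.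
Proof.
case: q; rewrite /cmp_coef /= expr0 mul1r binomC0 sf_scale1 /sf_dxn !derivn0;
  by case: H.
Qed.

Lemma cmp1 z q H : cmp_coef z q H 1 = if q then sf_Dbar H else 0.
Proof.
case: q; rewrite /cmp_coef //= expr0 mul1r binomC0 sf_scale1 /sf_dxn !derivn0;
  by case: (sf_Dbar H).
Qed.

Lemma cmp2 z q H : cmp_coef z q H 2 =
  if q then sf_scale (- ((z - 1) / 2%:R)) (sf_dx (sf_sigma H))
  else sf_scale (- (z / 2%:R)) (sf_dx H).
Proof.
by case: q; rewrite /cmp_coef /= expr1 binomC1 mulN1r /sf_dxn !derivn1.
Qed.

Lemma cmp3 z q H : cmp_coef z q H 3 =
  if q then sf_scale (- ((z - 1) / 2%:R)) (sf_dx (sf_Dbar H)) else 0.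
Proof.
by case: q; rewrite /cmp_coef //= expr1 binomC1 mulN1r /sf_dxn !derivn1.
Qed.

Lemma sf_scale0 c : sf_scale c 0 = 0.
Proof. by rewrite /sf_scale /= !scaler0. Qed.

Lemma dxn_vanish (H : sfun) n : sf_dx H = 0 -> (0 < n)%N -> sf_dxn n H = 0.
Proof.
case: H => a b; rewrite /sf_dx /sf_dxn /= => -[ha hb].
case: n => // n _; rewrite !derivSn ha hb.
by rewrite !derivn_poly0 ?size_poly0.
Qed.

Lemma dxn_vanish2 (H : sfun) n : sf_dx (sf_dx H) = 0 -> (1 < n)%N -> sf_dxn n H = 0.
Proof.
case: H => a b; rewrite /sf_dx /sf_dxn /= => -[ha hb].
case: n => // [] [] // n _; rewrite !derivSn ha hb.
by rewrite !derivn_poly0 ?size_poly0.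
Qed.

Definition sfconst (H : sfun) := H.1^`() = 0 /\ H.2^`() = 0.
Definition sflin (H : sfun) := H.1^`()^`() = 0 /\ H.2^`()^`() = 0.

Lemma cmp_ge4 z q H m : sflin H -> (4 <= m)%N -> cmp_coef z q H m = 0.
Proof.
case: H => a b [/= ha hb] hm.
have h2 : (1 < m./2)%N by case: m hm => // [] [] // [] // [] // m _ /=.
rewrite /cmp_coef; case: q => /=; case: ifP => _ //;
  rewrite dxn_vanish2 ?sf_scale0 // /sf_dx /= ?ha ?hb ?derivN ?hb ?ha ?oppr0 ?deriv0 ?oppr0 //.
Qed.

Lemma cmp_ge2 z q H m : sfconst H -> (2 <= m)%N -> cmp_coef z q H m = 0.
Proof.
case: H => a b [/= ha hb] hm.
have h2 : (0 < m./2)%N by case: m hm => // [] [] // m _ /=.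
rewrite /cmp_coef; case: q => /=; case: ifP => _ //;
  rewrite dxn_vanish ?sf_scale0 // /sf_dx /= ?ha ?hb ?derivN ?hb ?ha ?oppr0 ?deriv0 ?oppr0 //.
Qed.

Lemma cmp_ge1 z q H m : sfconst H -> H.2 = 0 -> (1 <= m)%N -> cmp_coef z q H m = 0.
Proof.
case: H => a b hc /= hb; rewrite leq_eqVlt => /orP [/eqP <-|hm].
  rewrite cmp1; case: q => //; case: hc => /= ha _.
  by rewrite /sf_Dbar /= ha hb oppr0.
by rewrite cmp_ge2.
Qed.

Lemma sf_mul0 x : sf_mul x 0 = 0.
Proof. by rewrite /sf_mul /= !mulr0 addr0. Qed.

Lemma cmpH1 (f : {poly CC}) z q m : f^`()^`() = 0 -> (3 <= m)%N ->
  cmp_coef z q (- ((f, 0) : sfun)) m = 0.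
Proof.
move=> hf; rewrite leq_eqVlt => /orP [/eqP <-|hm].
  rewrite cmp3; case: q => //.
  by rewrite /sf_Dbar /sf_dx /= !derivN hf !oppr0 deriv0 !oppr0 sf_scale0.
by rewrite cmp_ge4 // /sflin /= !derivN hf !deriv0 !oppr0.
Qed.

Lemma pairD (a b c d : {poly CC}) : ((a, b) : sfun) + (c, d) = (a + c, b + d).
Proof. by []. Qed.
Lemma pairN (a b : {poly CC}) : - ((a, b) : sfun) = (- a, - b).
Proof. by []. Qed.
Lemma pairB (a b c d : {poly CC}) : ((a, b) : sfun) - (c, d) = (a - c, b - d).
Proof. by []. Qed.

Lemma term2 z q (f : {poly CC}) : cmp_coef z q (- ((f, 0) : sfun)) 0 = (- f, 0).
Proof. by rewrite cmp0 pairN oppr0; case: q; rewrite /sf_sigma /= ?oppr0. Qed.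

Lemma term1 z q (f : {poly CC}) :
  cmp_coef z q (- ((f, 0) : sfun)) 1 + cmp_coef z q (sf_scale (1 / 2%:R) (sf_D (f, 0))) 0
  = (0, (1 / 2%:R) *: f^`()).
Proof.
rewrite cmp1 cmp0 pairN oppr0 /sf_scale /sf_D /= scaler0.
case: q; rewrite /sf_Dbar /sf_sigma /= ?pairD ?add0r ?addr0 ?oppr0 ?derivN ?opprK //.
congr (_, _); apply/polyP => n; rewrite !(coefD, coefN, coefZ, coefB).
field; rewrite ?pnatr_eq0 //.
Qed.

Lemma term0 z q lam (f : {poly CC}) : f^`()^`() = 0 ->
  cmp_coef z q (- ((f, 0) : sfun)) 2 + cmp_coef z q (sf_scale (1 / 2%:R) (sf_D (f, 0))) 1
  + cmp_coef z q (sf_scale lam (sf_dx (f, 0))) 0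
  = ((z / 2%:R + lam) *: f^`(), 0).
Proof.
move=> hf.
rewrite cmp2 cmp1 cmp0; case: q;
  rewrite /sf_Dbar /sf_sigma /sf_scale /sf_D /sf_dx /= ?pairD ?derivN ?deriv0 ?scaler0 ?oppr0 ?derivZ ?hf ?scaler0 ?oppr0 ?addr0;
  congr (_, _).
all: try (apply/polyP => n; rewrite !(coefD, coefN, coefZ, coefB, coef0)).
- field; rewrite ?pnatr_eq0 //.
- by rewrite deriv0 coef0 subr0.
- field; rewrite ?pnatr_eq0 //.
Qed.

Lemma act_formula lam mu k p l (f : {poly CC}) (hf : f^`()^`() = 0) (T : SQ l) (i : 'I_l) :
  act_h lam mu k p false (f, 0) T i =
  (f * (T i).1^`() + (mu - lam - k + i%:R / 2%:R) *: (f^`() * (T i).1),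
   f * (T i).2^`() + (mu - lam - k + (i%:R + 1) / 2%:R) *: (f^`() * (T i).2)).
Proof.
rewrite /act_h; cbv zeta. rewrite !big_ord_recr /=.
have c1 : sfconst (sf_scale (1 / 2%:R) (sf_D (f, 0))).
  by rewrite /sfconst /= !derivZ hf deriv0 !scaler0.
have c2 : sfconst (sf_scale lam (sf_dx (f, 0))).
  by rewrite /sfconst /= !derivZ hf !deriv0 !scaler0.
rewrite big1 ?add0r; last first.
  move=> j _.
  rewrite cmpH1 // ?subSS; last by have := ltn_ord j; lia.
  have hj := ltn_ord j.
  rewrite (cmp_ge2 _ _ _ _ c1); last by lia.
  rewrite (cmp_ge1 _ _ _ _ c2); [|by rewrite /= deriv0 scaler0|by lia].
  by rewrite !if_same !addr0 sf_mul0.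
rewrite leqnSn leqnn ltnSn ltnn (_ : (i.+1 < i)%N = false); last by lia.
rewrite (_ : (i.+2 - i = 2)%N); last by lia.
rewrite (_ : (i.+1 - i = 1)%N); last by lia.
rewrite (_ : (i.+2 - i.+1 = 1)%N); last by lia.
rewrite !subnn ?ltnn ?addr0.
rewrite (term2 _ _ f) (term1 _ _ f) (term0 _ _ _ f).
move: (sq_ext T i.+2) (sq_ext T i.+1) => [a2 b2] [a1 b1]; rewrite sq_ext_ord.
move: (T i) => [a0 b0].
rewrite /sf_mul /sf_scale /sf_D /sf_dx /sf_sigma /sf_Dbar /= ?addr0.
rewrite !(pairD, pairN, pairB) /=; congr (_, _);
  rewrite ?(mul0r, mulr0, derivN, deriv0, scaler0, oppr0, addr0, add0r, mulrN, mulNr, mulrDr, subr0, sub0r, opprK);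
  rewrite -?(scalerAr, scalerAl) ?(mulrN, mulNr, scalerN, scaleNr);
  rewrite ?(mulrC a0 f^`()) ?(mulrC b0 f^`()) ?(mulrC a1 f^`()) ?(mulrC a2 f) ?(mulrC b2 f);
  apply/polyP => n; rewrite !(coefD, coefN, coefZ, coefB); field; rewrite ?pnatr_eq0 //.
by [].
Qed.

Lemma act_h0 lam mu k p l b (T : SQ l) (i : 'I_l) :
  act_h lam mu k p b ((0, 0) : sfun) T i = 0.
Proof.
have e0 : ((0, 0) : sfun) = 0 by [].
have m0 : forall X, sf_mul 0 X = 0.
  by move=> [x y]; rewrite /sf_mul /= !mul0r addr0.
have d0 : sf_D 0 = 0 by rewrite /sf_D /= deriv0.
have x0 : sf_dx 0 = 0 by rewrite /sf_dx /= !deriv0.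
have c0 : forall z q m, cmp_coef z q 0 m = 0.
  move=> z q m; rewrite /cmp_coef.
  have h0 : forall n, sf_dxn n 0 = 0.
    by move=> n; rewrite /sf_dxn /= derivn_poly0 ?size_poly0.
  have hs : sf_sigma 0 = 0 by rewrite /sf_sigma /= oppr0.
  have hd : sf_Dbar 0 = 0 by rewrite /sf_Dbar /= deriv0 oppr0.
  by case: q; case: ifP => _ //=; rewrite ?hs ?hd h0 sf_scale0.
rewrite /act_h; cbv zeta; rewrite e0 !m0 d0 x0 !m0 !sf_scale0.
rewrite big1; first by rewrite subr0 !addr0 oppr0.
move=> j _.
have n0 : - (0 : sfun) = 0 by rewrite oppr0.
by rewrite n0 !c0 !if_same !addr0 sf_mul0.
Qed.

Lemma SQ_act_formula lam mu k p l (f : {poly CC}) (hf : f^`()^`() = 0) (T : SQ l) (i : 'I_l) :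
  SQ_act lam mu k p (f, 0) T i =
  (f * (T i).1^`() + (mu - lam - k + i%:R / 2%:R) *: (f^`() * (T i).1),
   f * (T i).2^`() + (mu - lam - k + (i%:R + 1) / 2%:R) *: (f^`() * (T i).2)).
Proof. by rewrite /SQ_act /= act_formula // act_h0 addr0. Qed.

Definition sfcomp (g : bool) (H : sfun) : {poly CC} := if g then H.2 else H.1.
Definition ev (c : CC) (i : nat) (g : bool) (n : nat) : CC :=
  c + (i + g + 2 * n)%:R / 2%:R.

Lemma E_coef lam mu k p l (T : SQ l) i g n :
  (sfcomp g (SQ_act lam mu k p ('X, 0) T i))`_n = ev (mu - lam - k) i g n * (sfcomp g (T i))`_n.
Proof.
have hX : ('X : {poly CC})^`()^`() = 0 by rewrite derivX -polyC1 derivC.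
rewrite (SQ_act_formula _ _ _ _ _ _ hX) derivX.
rewrite /ev; case: g => /=; rewrite !mul1r coefD coefZ coefXM coef_deriv;
  case: n => [|n] /=; rewrite ?mulr_natr !natrD ?natrM; field; rewrite ?pnatr_eq0 //.
Qed.

Lemma D_coef lam mu k p l (T : SQ l) i g n :
  (sfcomp g (SQ_act lam mu k p (1, 0) T i))`_n = (sfcomp g (T i))`_n.+1 *+ n.+1.
Proof.
have h1 : (1 : {poly CC})^`() = 0 by rewrite -polyC1 derivC.
have h2 : (1 : {poly CC})^`()^`() = 0 by rewrite h1 deriv0.
rewrite (SQ_act_formula _ _ _ _ _ _ h2) h1.
by case: g => /=; rewrite !mul1r mul0r scaler0 addr0 coef_deriv.
Qed.

Definition ZT (l : nat) : SQ l := fun _ => 0.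
Definition coefT l (T : SQ l) (i : 'I_l) (g : bool) (n : nat) : CC := (sfcomp g (T i))`_n.
Arguments coefT {l}.

Lemma coefT_Z l i g n : coefT (ZT l) i g n = 0.
Proof. by rewrite /coefT /ZT; case: g; rewrite /= coef0. Qed.

Lemma SQ_ext l (T U : SQ l) : (forall i g n, coefT T i g n = coefT U i g n) -> T = U.
Proof.
move=> h; apply: functional_extensionality => i.
move: (h i false) (h i true); rewrite /coefT.
case: (T i) => a b; case: (U i) => c d /= h1 h2.
by congr (_, _); apply/polyP.
Qed.

Lemma compD g (x y : sfun) : sfcomp g (x + y) = sfcomp g x + sfcomp g y.
Proof. by case: g. Qed.
Lemma compZ g c (x : sfun) : sfcomp g (sf_scale c x) = c *: sfcomp g x.
Proof. by case: g. Qed.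

Lemma sf_scale0l (x : sfun) : sf_scale 0 x = 0.
Proof. by rewrite /sf_scale !scale0r. Qed.

Definition Gop lam mu k p l (e : CC) (T : SQ l) : SQ l :=
  fun i => SQ_act lam mu k p ('X, 0) T i + sf_scale (- e) (T i).
Definition Dop lam mu k p l (T : SQ l) : SQ l := SQ_act lam mu k p (1, 0) T.
Definition Gs lam mu k p l (s : seq CC) (T : SQ l) : SQ l := foldr (Gop lam mu k p l) T s.
Arguments Gop lam mu k p {l}.
Arguments Dop lam mu k p {l}.
Arguments Gs lam mu k p {l}.

Lemma coef_G lam mu k p l e (T : SQ l) i g n :
  coefT (Gop lam mu k p e T) i g n = (ev (mu - lam - k) i g n - e) * coefT T i g n.
Proof.
by rewrite /coefT /Gop compD compZ coefD coefZ E_coef mulrBl mulNr.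
Qed.

Lemma coef_Gs lam mu k p l s (T : SQ l) i g n :
  coefT (Gs lam mu k p s T) i g n =
  (\prod_(e <- s) (ev (mu - lam - k) i g n - e)) * coefT T i g n.
Proof.
elim: s => [|e s IH]; first by rewrite big_nil mul1r.
by rewrite /Gs /= -/(Gs _ _ _ _ _ _) coef_G IH big_cons mulrA.
Qed.

Lemma coef_D lam mu k p l (T : SQ l) i g n :
  coefT (Dop lam mu k p T) i g n = coefT T i g n.+1 *+ n.+1.
Proof. exact: D_coef. Qed.

Section Equiv.
Variables (lam mu k lam' mu' k' : CC) (p p' : bool) (l l' : nat) (phi : SQ l -> SQ l').
Hypothesis hphi : SQ_equiv lam mu k p lam' mu' k' p' phi.

Lemma phi_Z : phi (ZT l) = ZT l'.
Proof.
case: hphi => [[_ hsc] _ _].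
have e1 : (fun i => sf_scale 0 (ZT l i)) = ZT l.
  by apply: functional_extensionality => i; rewrite sf_scale0l.
rewrite -e1 hsc; apply: functional_extensionality => i; by rewrite sf_scale0l.
Qed.

Lemma phi_G e T : phi (Gop lam mu k p e T) = Gop lam' mu' k' p' e (phi T).
Proof.
case: hphi => [[hadd hsc] _ heq].
rewrite /Gop (hadd (SQ_act lam mu k p ('X, 0) T) (fun i => sf_scale (- e) (T i))).
by rewrite hsc heq.
Qed.

Lemma phi_Gs s T : phi (Gs lam mu k p s T) = Gs lam' mu' k' p' s (phi T).
Proof.
elim: s => [|e s IH] //=.
by rewrite -/(Gs _ _ _ _ _ _) phi_G IH.
Qed.

Lemma phi_D T : phi (Dop lam mu k p T) = Dop lam' mu' k' p' (phi T).
Proof. by case: hphi => [_ _ heq]; rewrite /Dop heq. Qed.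

End Equiv.
Arguments phi_Z {lam mu k lam' mu' k' p p' l l' phi}.
Arguments phi_G {lam mu k lam' mu' k' p p' l l' phi}.
Arguments phi_Gs {lam mu k lam' mu' k' p p' l l' phi}.
Arguments phi_D {lam mu k lam' mu' k' p p' l l' phi}.

Definition Spec lam mu k p l (e : CC) :=
  exists T : SQ l, T <> ZT l /\ Dop lam mu k p T = ZT l /\ Gop lam mu k p e T = ZT l.

Lemma Spec_fwd lam mu k lam' mu' k' p p' l l' (phi : SQ l -> SQ l') e :
  SQ_equiv lam mu k p lam' mu' k' p' phi ->
  Spec lam mu k p l e -> Spec lam' mu' k' p' l' e.
Proof.
move=> hphi [T [hT [hD hG]]].
have [_ [psi h1 h2] _] := hphi.
exists (phi T); split; [|split].
- move=> h; apply: hT; apply: (can_inj h1); by rewrite h (phi_Z hphi).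
- by rewrite -(phi_D hphi) hD (phi_Z hphi).
- by rewrite -(phi_G hphi) hG (phi_Z hphi).
Qed.

Lemma Spec_bwd lam mu k lam' mu' k' p p' l l' (phi : SQ l -> SQ l') e :
  SQ_equiv lam mu k p lam' mu' k' p' phi ->
  Spec lam' mu' k' p' l' e -> Spec lam mu k p l e.
Proof.
move=> hphi [U [hU [hD hG]]].
have [_ [psi h1 h2] _] := hphi.
have inj := can_inj h1.
exists (psi U); split; [|split].
- by move=> h; apply: hU; rewrite -[U]h2 h (phi_Z hphi).
- by apply: inj; rewrite (phi_D hphi) h2 hD (phi_Z hphi).
- by apply: inj; rewrite (phi_G hphi) h2 hG (phi_Z hphi).
Qed.

Lemma nonzero_coef {l} (T : SQ l) : T <> ZT l -> exists i g n, coefT T i g n != 0.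
Proof.
move=> hT; apply: NNPP => hn; apply: hT; apply: SQ_ext => i g n.
rewrite coefT_Z; apply/eqP; apply: negbNE; apply/negP => h.
by apply: hn; exists i, g, n.
Qed.

Lemma Spec_char lam mu k p l e :
  Spec lam mu k p l e -> exists (i : 'I_l) (g : bool), e = ev (mu - lam - k) i g 0.
Proof.
move=> [T [hT [hD hG]]].
have [i [g [n hn]]] := nonzero_coef T hT.
have hn0 : n = 0%N.
  case: n hn => // n hn.
  have := congr1 (fun U => coefT U i g n) hD.
  rewrite coef_D coefT_Z => /eqP; rewrite mulrn_eq0 /= => /eqP h.
  by rewrite h eqxx in hn.
subst n; exists i, g.
have := congr1 (fun U => coefT U i g 0) hG.
rewrite coef_G coefT_Z => /eqP; rewrite mulf_eq0 (negbTE hn) orbF subr_eq0.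
by move/eqP.
Qed.

Definition Wit {l} (i0 : 'I_l) (g0 : bool) : SQ l :=
  fun i => if i == i0 then (if g0 then (0, 1) else (1, 0)) else 0.

Lemma coef_Wit l i0 g0 i g n :
  coefT (@Wit l i0 g0) i g n = ((i == i0) && (g == g0) && (n == 0%N))%:R.
Proof.
rewrite /coefT /Wit; case: eqP => _ /=; last by case: g; rewrite coef0.
by case: g0; case: g; rewrite /= ?coef0 ?coef1 ?andbF //.
Qed.

Lemma Spec_wit lam mu k p l (i0 : 'I_l) g0 :
  Spec lam mu k p l (ev (mu - lam - k) i0 g0 0).
Proof.
exists (Wit i0 g0); split; [|split].
- move=> h; have := congr1 (fun U => coefT U i0 g0 0) h.
  by rewrite coef_Wit coefT_Z !eqxx /= => /eqP; rewrite oner_eq0.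
- apply: SQ_ext => i g n; rewrite coef_D coef_Wit coefT_Z andbF.
  by rewrite mul0rn.
- apply: SQ_ext => i g n; rewrite coef_G coef_Wit coefT_Z.
  case: eqP => [->|] /=; last by rewrite mulr0.
  case: eqP => [->|] /=; last by rewrite mulr0.
  case: eqP => [->|] /=; last by rewrite mulr0.
  by rewrite subrr mul0r.
Qed.
Arguments Spec_fwd {lam mu k lam' mu' k' p p' l l' phi e}.
Arguments Spec_bwd {lam mu k lam' mu' k' p p' l l' phi e}.
Arguments Spec_char {lam mu k p l e}.
Arguments Spec_wit lam mu k p {l}.

Lemma half_inj (c : CC) a b : c + a%:R / 2%:R = c + b%:R / 2%:R -> a = b.
Proof.
move/addrI/(mulIf _) => h.
have /h /eqP : (2%:R : CC)^-1 != 0 by rewrite invr_eq0 pnatr_eq0.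
by rewrite eqr_nat => /eqP.
Qed.

Lemma half_sum (c c' : CC) x y :
  c = c' + x%:R / 2%:R -> c' = c + y%:R / 2%:R -> (x = 0 /\ y = 0)%N.
Proof.
move=> h1 h2.
have e : ((x + y)%N%:R : CC) / 2%:R = 0.
  rewrite natrD mulrDl.
  have -> : x%:R / 2%:R = c - c' :> CC by rewrite h1 addrAC subrr add0r.
  have -> : y%:R / 2%:R = c' - c :> CC by rewrite h2 addrAC subrr add0r.
  by rewrite addrA subrK subrr.
move/eqP: e; rewrite mulf_eq0 invr_eq0 !pnatr_eq0 orbF => /eqP; lia.
Qed.

Lemma ev0 c i g : ev c i g 0 = c + (i + g)%N%:R / 2%:R.
Proof. by rewrite /ev muln0 addn0. Qed.

Lemma main_cl lam mu k lam' mu' k' p p' l l' (phi : SQ l -> SQ l') :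
  (0 < l)%N -> (0 < l')%N ->
  SQ_equiv lam mu k p lam' mu' k' p' phi ->
  mu - lam - k = mu' - lam' - k' /\ l = l'.
Proof.
move=> hl hl' hphi.
set c := mu - lam - k; set c' := mu' - lam' - k'.
have [j [g hj]] := Spec_char (Spec_fwd hphi (Spec_wit lam mu k p (Ordinal hl) false)).
have [j' [g' hj']] := Spec_char (Spec_bwd hphi (Spec_wit lam' mu' k' p' (Ordinal hl') false)).
rewrite !ev0 /= add0n mul0r ?addr0 in hj.
rewrite !ev0 /= add0n mul0r ?addr0 in hj'.
have [_ hx] := half_sum _ _ _ _ hj' hj.
have hcc : c = c'.
  by rewrite /c /c' hj hx mul0r addr0.
split=> //.
have hl1 : (l.-1 < l)%N by lia.
have hl1' : (l'.-1 < l')%N by lia.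
have [j2 [g2 hj2]] := Spec_char (Spec_fwd hphi (Spec_wit lam mu k p (Ordinal hl1) true)).
have [j3 [g3 hj3]] := Spec_char (Spec_bwd hphi (Spec_wit lam' mu' k' p' (Ordinal hl1') true)).
rewrite !ev0 /= -/c -/c' in hj2 hj3; rewrite hcc in hj2 hj3.
have e2 := half_inj _ _ _ hj2.
have e3 := half_inj _ _ _ hj3.
have := ltn_ord j2; have := ltn_ord j3.
clear hj2 hj3; move: e2 e3; case: g2; case: g3 => /=; lia.
Qed.

Definition cls l (T : SQ l) (b : bool) :=
  forall i g n, coefT T i g n != 0 -> odd (i + g) = b.
Arguments cls {l}.

Lemma part_eq0 g (X : sfun) : sf_part g X = 0 <-> sfcomp g X = 0.
Proof.
case: X => a b; case: g; rewrite /sf_part /sfcomp /=; split.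
- by case.
- by move=> ->.
- by case.
- by move=> ->.
Qed.

Lemma odd_add_bool (j : nat) (g : bool) : odd (j + g) = odd j (+) g.
Proof. by rewrite oddD; case: g; rewrite /= ?addbT ?addbF. Qed.

Lemma gen_cls l (T : SQ l) (b : bool) :
  (forall (j : 'I_l) (g : bool), (g (+) odd j != b) -> sf_part g (T j) = 0) <-> cls T b.
Proof.
split.
- move=> h i g n hn; apply/eqP; apply: contraNT hn => hb.
  have hb' : g (+) odd i != b by rewrite addbC -odd_add_bool.
  have /part_eq0 h0 := h i g hb'.
  by rewrite /coefT h0 coef0.
- move=> h j g hb; apply/part_eq0; apply/polyP => n; rewrite coef0.
  apply/eqP; apply: contraNT hb => hn.
  by rewrite addbC -odd_add_bool (h j g n hn) eqxx.
Qed.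

Lemma sq_even_cls p l (T : SQ l) : sq_even p T <-> cls T p.
Proof.
rewrite -gen_cls /sq_even; split=> h j g hb; apply: h;
  by move: hb; case: p; case: g; case: (odd j).
Qed.

Lemma sq_odd_cls p l (T : SQ l) : sq_odd p T <-> cls T (~~ p).
Proof.
rewrite -gen_cls /sq_odd; split=> h j g hb; apply: h;
  by move: hb; case: p; case: g; case: (odd j).
Qed.
Arguments main_cl {lam mu k lam' mu' k' p p' l l' phi}.

Lemma cls_transfer lam mu k lam' mu' k' p p' l l' (phi : SQ l -> SQ l') :
  SQ_equiv lam mu k p lam' mu' k' p' phi ->
  mu - lam - k = mu' - lam' - k' -> forall T b, cls T b -> cls (phi T) b.
Proof.
move=> hphi hc T b hT.
set c := mu - lam - k.
set mx := (\max_(i : 'I_l) (size (T i).1 + size (T i).2))%N.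
set M := (l + 2 * mx).+2.
set s := [seq c + m%:R / 2%:R | m <- [seq m <- iota 0 M | odd m == b]].
have hG : Gs lam mu k p s T = ZT l.
  apply: SQ_ext => i g n; rewrite coef_Gs coefT_Z.
  case: (eqVneq (coefT T i g n) 0) => [->|hn]; first by rewrite mulr0.
  apply/eqP; rewrite mulf_eq0; apply/orP; left.
  rewrite prodf_seq_eq0; apply/hasP; exists (ev c i g n); last first.
    by rewrite /= subrr eqxx.
  apply/mapP; exists (i + g + 2 * n)%N => //.
  rewrite mem_filter mem_iota add0n; apply/andP; split.
    by rewrite oddD oddM /= addbF (hT i g n hn).
  have hs : (n < size (sfcomp g (T i)))%N.
    move: hn; rewrite /coefT; apply: contraNT; rewrite -leqNgt => hs.
    by apply/eqP; apply: nth_default.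
  have hm : (size (sfcomp g (T i)) <= mx)%N.
    apply: leq_trans (leq_bigmax i); clear hn hs; case: g => /=; lia.
  have := ltn_ord i; clear hn; case: g hs hm => /=; lia.
have hG' := phi_Gs hphi s T; rewrite hG (phi_Z hphi) in hG'.
move=> j g n hn.
have := congr1 (fun U => coefT U j g n) hG'; rewrite /= coef_Gs coefT_Z => /eqP.
rewrite eq_sym mulf_eq0 (negbTE hn) orbF prodf_seq_eq0 => /hasP [e /mapP [m]].
rewrite mem_filter => /andP [/eqP hm _] -> /=.
rewrite subr_eq0 /ev -hc => /eqP /(half_inj _ _ _) hm'.
by rewrite -hm -hm' (oddD (j + g) (2 * n)) oddM /= addbF.
Qed.

Theorem lemma2p3 (lam mu lam' mu' k k' : CC) (p p' : bool) (l l' : nat) :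
  (0 < l)%N -> (0 < l')%N ->
  forall phi : SQ l -> SQ l',
  SQ_equiv lam mu k p lam' mu' k' p' phi ->
  [/\ l = l', (mu - lam) - k = (mu' - lam') - k' &
      (if p == p' then even_map p p' phi else odd_map p p' phi)].
Proof.
move=> hl hl' phi hphi.
have [hc hll] := main_cl hl hl' hphi.
split => //.
have tr := cls_transfer _ _ _ _ _ _ _ _ _ _ phi hphi hc.
case: eqP => [<-|hne].
- move=> T; split.
  + by move/sq_even_cls => h; apply/sq_even_cls; exact: tr.
  + by move/sq_odd_cls => h; apply/sq_odd_cls; exact: tr.
- have -> : p' = ~~ p by clear -hne; case: p p' hne => [] [].
  move=> T; split.
  + by move/sq_even_cls => h; apply/sq_odd_cls; rewrite negbK; exact: tr.
  + by move/sq_odd_cls => h; apply/sq_even_cls; exact: tr.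
Qed.
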